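(* Define words $w_{[n]}$ over $\{1,-1\}$ of length $3^n$ by $w_{[0]}=1$ and $w_{[n+1]}=w_{[n]}\,w_{[n]}\,w_{[n]}'$, where $w_{[n]}'$ is obtained from $w_{[n]}$ by changing its middle symbol (the symbol in position $(3^n+1)/2$, which is $1$) from $1$ to $-1$. Then $w_{[n]}$ is a prefix of $w_{[n+1]}$ for all $n$, so the limit $\lim_{n\to\infty}w_{[n]}$ is a well-defined infinite sequence, and it equals $w_\alpha$.
   Context: $w_\alpha=\lim_{n\to\infty}\phi^n(1)$, where $\phi$ is the monoid endomorphism of $\{1,-1\}^*$ determined by $\phi(1)=1\,1\,(-1)$ and $\phi(-1)=1\,(-1)\,(-1)$. *)

(* Defs.v *)
From mathcomp Require Import all_boot all_order all_algebra.
Set Implicit Arguments. Unset Strict Implicit. Unset Printing Implicit Defensive.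
Import GRing.Theory.
Local Open Scope ring_scope.

(* Image of a single symbol under phi: phi(1) = 1 1 (-1), phi(-1) = 1 (-1) (-1).
   (Only ever applied to symbols in {1,-1}.) *)
Definition phi_sym (x : int) : seq int :=
  if x == 1 then [:: 1; 1; -1] else [:: 1; -1; -1].

Definition phi (s : seq int) : seq int := flatten (map phi_sym s).

Definition phi_iter (n : nat) : seq int := iter n phi [:: 1].

(* w_[n]: w_[0] = 1, w_[n+1] = w_[n] w_[n] w_[n]', where w_[n]' changes the
   symbol at (1-based) position (3^n+1)/2, i.e. 0-based index (3^n-1)/2,
   to -1. *)
Fixpoint w_ (n : nat) : seq int :=
  match n with
  | 0 => [:: 1]
  | m.+1 => w_ m ++ w_ m ++ set_nth 0 (w_ m) (((3 ^ m).-1)./2)%N (-1)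
  end.

Definition word_limit (u : nat -> seq int) (w : nat -> int) : Prop :=
  forall k : nat, exists N : nat, forall n : nat, (N <= n)%N ->
    (k < size (u n))%N /\ nth 0 (u n) k = w k.

(* Main.v *)
Require Import Defs.
From mathcomp Require Import all_boot all_order all_algebra.
From mathcomp Require Import zify.
Local Open Scope ring_scope.

Lemma set_nth_catR (s t : seq int) i (x : int) :
  set_nth 0 (s ++ t) (size s + i) x = s ++ set_nth 0 t i x.
Proof. by elim: s => //= a s ->. Qed.

Lemma set_nth_catL (s t : seq int) i (x : int) : (i < size s)%N ->
  set_nth 0 (s ++ t) i x = set_nth 0 s i x ++ t.
Proof. by elim: s i => [|a s IH] [|i] //= H; rewrite IH. Qed.

Lemma phi_cat s t : phi (s ++ t) = phi s ++ phi t.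
Proof. by rewrite /phi map_cat flatten_cat. Qed.

Lemma iter_phi_cat n s t : iter n phi (s ++ t) = iter n phi s ++ iter n phi t.
Proof. by elim: n => //= n ->; rewrite phi_cat. Qed.

Definition A n := iter n phi [:: 1].
Definition B n := iter n phi [:: -1].

Lemma A_S n : A n.+1 = A n ++ A n ++ B n.
Proof.
rewrite /A /B iterSr.
have -> : phi [:: 1] = [:: 1] ++ [:: 1] ++ [:: -1] by [].
by rewrite !iter_phi_cat.
Qed.

Lemma B_S n : B n.+1 = A n ++ B n ++ B n.
Proof.
rewrite /A /B iterSr.
have -> : phi [:: -1] = [:: 1] ++ [:: -1] ++ [:: -1] by [].
by rewrite !iter_phi_cat.
Qed.

Definition mid n := (((3 ^ n).-1)./2)%N.

Lemma mid_lt n : (mid n < 3 ^ n)%N.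
Proof. rewrite /mid -divn2; have := expn_gt0 3 n; lia. Qed.

Lemma mid_S n : mid n.+1 = (3 ^ n + mid n)%N.
Proof. rewrite /mid -!divn2 expnS; have := expn_gt0 3 n; lia. Qed.

Lemma AB n : [/\ size (A n) = (3 ^ n)%N, size (B n) = (3 ^ n)%N,
  nth 0 (A n) (mid n) = 1 & B n = set_nth 0 (A n) (mid n) (-1)].
Proof.
elim: n => [|n [sA sB mA eB]]; first by [].
rewrite A_S B_S !size_cat sA sB expnS mid_S; split.
- lia.
- lia.
- by rewrite nth_cat sA ltnNge leq_addr /= addKn nth_cat sA mid_lt.
- by rewrite -{1}sA set_nth_catR set_nth_catL ?sA ?mid_lt // -eB.
Qed.

Lemma wA n : w_ n = A n.
Proof.
elim: n => [|n IH] //; rewrite [w_ _]/=.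
by rewrite IH A_S; case: (AB n) => _ _ _ ->.
Qed.

Lemma w_pref k n : (k <= n)%N -> exists t, w_ n = w_ k ++ t.
Proof.
elim: n => [|n IH]; first by rewrite leqn0 => /eqP ->; exists [::]; rewrite cats0.
rewrite leq_eqVlt => /orP [/eqP ->|H]; first by exists [::]; rewrite cats0.
have [t Ht] := IH H.
by exists (t ++ w_ n ++ set_nth 0 (w_ n) (((3 ^ n).-1)./2)%N (-1)); rewrite /= Ht -catA.
Qed.

Lemma size_w n : size (w_ n) = (3 ^ n)%N.
Proof. by rewrite wA; case: (AB n). Qed.

Theorem mainTheorem3 :
  (forall n : nat, size (w_ n) = (3 ^ n)%N) /\
  (forall n : nat, nth 0 (w_ n) (((3 ^ n).-1)./2)%N = 1) /\
  (forall n : nat, prefix (w_ n) (w_ n.+1)) /\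
  (exists w_alpha : nat -> int,
      word_limit phi_iter w_alpha /\ word_limit w_ w_alpha).
Proof.
have kl k : (k < size (w_ k))%N.
  rewrite size_w; elim: k => // k IH; rewrite expnS; have := expn_gt0 3 k; lia.
have lim : word_limit w_ (fun k => nth 0 (w_ k) k).
  move=> k; exists k => n kn; have [t ->] := w_pref _ _ kn.
  by rewrite size_cat nth_cat kl; split=> //; apply: leq_trans (kl k) (leq_addr _ _).
split; first exact: size_w.
split; first by move=> n; rewrite wA; case: (AB n).
split; first by move=> n; rewrite /= prefix_prefix.
exists (fun k => nth 0 (w_ k) k); split=> //.
by move=> k; have [N HN] := lim k; exists N => n /HN; rewrite wA.
Qed.
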